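(* Let $x>0$, $y>0$. (1) If $x\ge1$ and $y\ge1$, then $\Gamma(x,y)\ge\max\Big(\frac{\Gamma(x)}{y^{x}},\frac{\Gamma(y)}{x^{y}}\Big)$. (2) If $x\ge1$ and $0<y\le1$, then $\frac{\Gamma(y)}{x^{y}}\le\Gamma(x,y)\le\frac{\Gamma(x)}{y^{x}}$. (3) If $0<x\le1$ and $y\ge1$, then $\frac{\Gamma(x)}{y^{x}}\le\Gamma(x,y)\le\frac{\Gamma(y)}{x^{y}}$. (4) If $0<x\le1$ and $0<y\le1$, then $\Gamma(x,y)\le\min\Big(\frac{\Gamma(x)}{y^{x}},\frac{\Gamma(y)}{x^{y}}\Big)$.
   Context: For $x>0,y>0$ the Bigamma function is the (convergent) improper integral $\Gamma(x,y):=\int_0^1(-\ln t)^{x-1}\big(-\ln(1-t)\big)^{y-1}\,dt$. $\Gamma(x)$ (one argument) denotes Euler's gamma function. *)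

(* Defs.v *)
From Stdlib Require Import Reals.
From Coquelicot Require Import Coquelicot.
Open Scope R_scope.

Definition EulerGamma (x : R) : R :=
  RInt_gen (fun t => Rpower t (x - 1) * exp (- t)) (at_right 0) (Rbar_locally p_infty).

Definition Bigamma (x y : R) : R :=
  RInt_gen (fun t => Rpower (- ln t) (x - 1) * Rpower (- ln (1 - t)) (y - 1))
    (at_right 0) (at_left 1).

(* Main.v *)
Require Import Defs.
From Stdlib Require Import Reals.
From Coquelicot Require Import Coquelicot.
Open Scope R_scope.
From Stdlib Require Import Lra.

Lemma RInt_diff_bound (f G : R -> R) (a b c : R) :
  ex_RInt f a c -> ex_RInt f b c -> ex_RInt G a c -> ex_RInt G b c ->
  (forall z, Rmin a c <= z <= Rmax a c -> Rabs (f z) <= G z) ->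
  (forall z, Rmin b c <= z <= Rmax b c -> Rabs (f z) <= G z) ->
  Rabs (RInt f a c - RInt f b c) <= Rabs (RInt G a c - RInt G b c).
Proof.
  intros fa fb Ga Gb Ha Hb.
  assert (fab : ex_RInt f a b) by (apply ex_RInt_Chasles with c; auto; apply ex_RInt_swap; auto).
  assert (Gab : ex_RInt G a b) by (apply ex_RInt_Chasles with c; auto; apply ex_RInt_swap; auto).
  assert (E1 : RInt f a c - RInt f b c = RInt f a b).
  { rewrite <- (RInt_Chasles f a b c fab fb). unfold plus; simpl. ring. }
  assert (E2 : RInt G a c - RInt G b c = RInt G a b).
  { rewrite <- (RInt_Chasles G a b c Gab Gb). unfold plus; simpl. ring. }
  rewrite E1, E2.
  assert (Hz : forall z, Rmin a b <= z <= Rmax a b -> Rabs (f z) <= G z).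
  { intros z Hz. unfold Rmin, Rmax in *.
    destruct (Rle_dec a b), (Rle_dec a c), (Rle_dec b c);
    try (apply Ha; unfold Rmin, Rmax; destruct (Rle_dec a c); try lra; fail);
    try (apply Hb; unfold Rmin, Rmax; destruct (Rle_dec b c); try lra; fail);
    destruct (Rle_dec z c);
    first [apply Ha; unfold Rmin, Rmax; destruct (Rle_dec a c); lra
          |apply Hb; unfold Rmin, Rmax; destruct (Rle_dec b c); lra]. }
  assert (gen : forall p q, p <= q -> ex_RInt f p q -> ex_RInt G p q ->
     (forall z, p <= z <= q -> Rabs (f z) <= G z) -> Rabs (RInt f p q) <= RInt G p q).
  { intros p q pq fpq Gpq Hpq.
    assert (Hm : ex_RInt (fun t => - G t) p q).
    { apply (ex_RInt_opp G p q) in Gpq. exact Gpq. }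
    apply Rabs_le; split.
    - assert (RInt (fun t => - G t) p q <= RInt f p q).
      { apply RInt_le; auto. intros t Ht. specialize (Hpq t ltac:(lra)).
        apply Rabs_le_between in Hpq. lra. }
      pose proof (RInt_opp G p q Gpq) as HO. unfold opp in HO; simpl in HO.
      change (RInt (fun x => - G x) p q = - RInt G p q) in HO. lra.
    - apply RInt_le; auto. intros t Ht. specialize (Hpq t ltac:(lra)).
      apply Rabs_le_between in Hpq. lra. }
  destruct (Rle_dec a b) as [ab|ab].
  - assert (Hz' : forall z, a <= z <= b -> Rabs (f z) <= G z).
    { intros z Hz'. apply Hz. unfold Rmin, Rmax; destruct (Rle_dec a b); lra. }
    pose proof (gen a b ab fab Gab Hz'). eapply Rle_trans; [exact H|]. apply Rle_abs.
  - assert (Hz' : forall z, b <= z <= a -> Rabs (f z) <= G z).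
    { intros z Hz'. apply Hz. unfold Rmin, Rmax; destruct (Rle_dec a b); lra. }
    pose proof (gen b a ltac:(lra) (ex_RInt_swap _ _ _ fab) (ex_RInt_swap _ _ _ Gab) Hz').
    rewrite <- (opp_RInt_swap f a b fab), <- (opp_RInt_swap G a b Gab) in H.
    unfold opp in H; simpl in H. rewrite Rabs_Ropp in H.
    eapply Rle_trans; [exact H|]. rewrite <- Rabs_Ropp. apply Rle_abs.
Qed.

Lemma swapR (f : R -> R) a b : ex_RInt f b a -> RInt f a b = - RInt f b a.
Proof. intros H. rewrite <- (opp_RInt_swap f b a H). reflexivity. Qed.

Lemma cmp_conv (Fa Fb : (R -> Prop) -> Prop) (PFa : ProperFilter Fa) (PFb : ProperFilter Fb)
  (f G : R -> R) (lG : R) (Pa Pb : R -> Prop) :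
  Fa Pa -> Fb Pb ->
  (forall u v, Pa u -> Pb v -> ex_RInt f u v /\ ex_RInt G u v /\
     forall z, Rmin u v <= z <= Rmax u v -> Rabs (f z) <= G z) ->
  is_RInt_gen G Fa Fb lG -> exists l, is_RInt_gen f Fa Fb l.
Proof.
  intros HPa HPb Hreg HG.
  assert (PP : ProperFilter (filter_prod Fa Fb)) by (apply filter_prod_proper; auto).
  refine (proj1 (filterlimi_locally_cauchy (U:=R_CompleteSpace) (F:=filter_prod Fa Fb)
     (fun ab y => is_RInt f (fst ab) (snd ab) y) _) _).
  - apply Filter_prod with Pa Pb; auto. intros u v Hu Hv.
    destruct (Hreg u v Hu Hv) as [fu _]. split.
    + destruct fu as [y Hy]. exists y. exact Hy.
    + intros y1 y2 H1 H2.
      change (is_RInt (V:=R_CompleteNormedModule) f u v y1) in H1.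
      change (is_RInt (V:=R_CompleteNormedModule) f u v y2) in H2.
      apply is_RInt_unique in H1. apply is_RInt_unique in H2. congruence.
  - intros eps.
    assert (eps4 : 0 < eps / 4) by (destruct eps; simpl; lra).
    specialize (HG (ball lG (mkposreal _ eps4)) (locally_ball lG (mkposreal _ eps4))).
    destruct HG as [Qa Qb HQa HQb HQ].
    exists (fun ab => (Pa (fst ab) /\ Qa (fst ab)) /\ (Pb (snd ab) /\ Qb (snd ab))).
    split.
    + apply Filter_prod with (fun a => Pa a /\ Qa a) (fun b => Pb b /\ Qb b);
        try (apply filter_and; auto). intros a b Ha Hb; simpl; auto.
    + intros [u v] [u' v'] [[Pu Qu] [Pv Qv]] [[Pu' Qu'] [Pv' Qv']] y1 y2 H1 H2. simpl in *.
      change (is_RInt (V:=R_CompleteNormedModule) f u v y1) in H1.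
      change (is_RInt (V:=R_CompleteNormedModule) f u' v' y2) in H2.
      apply is_RInt_unique in H1. apply is_RInt_unique in H2. subst y1 y2.
      assert (Gb : forall a b, Qa a -> Qb b -> Pa a -> Pb b -> Rabs (RInt G a b - lG) < eps / 4).
      { intros a b Qa0 Qb0 Pa0 Pb0. destruct (HQ a b Qa0 Qb0) as [y [Hy By]].
        change (is_RInt (V:=R_CompleteNormedModule) G a b y) in Hy. apply is_RInt_unique in Hy. rewrite Hy.
        exact By. }
      pose proof (Hreg u v Pu Pv) as [fuv [Guv buv]].
      pose proof (Hreg u' v Pu' Pv) as [fu'v [Gu'v bu'v]].
      pose proof (Hreg u' v' Pu' Pv') as [fu'v' [Gu'v' bu'v']].
      pose proof (RInt_diff_bound f G u u' v fuv fu'v Guv Gu'v buv bu'v) as D1.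
      assert (D2 : Rabs (RInt f u' v - RInt f u' v') <= Rabs (RInt G u' v - RInt G u' v')).
      { rewrite (swapR f u' v (ex_RInt_swap _ _ _ fu'v)), (swapR f u' v' (ex_RInt_swap _ _ _ fu'v')).
        rewrite (swapR G u' v (ex_RInt_swap _ _ _ Gu'v)), (swapR G u' v' (ex_RInt_swap _ _ _ Gu'v')).
        replace (- RInt f v u' - - RInt f v' u') with (- (RInt f v u' - RInt f v' u')) by ring.
        replace (- RInt G v u' - - RInt G v' u') with (- (RInt G v u' - RInt G v' u')) by ring.
        rewrite !Rabs_Ropp.
        apply RInt_diff_bound; try (apply ex_RInt_swap; auto).
        - intros z Hz; apply bu'v. rewrite Rmin_comm, Rmax_comm; auto.
        - intros z Hz; apply bu'v'. rewrite Rmin_comm, Rmax_comm; auto. }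
      pose proof (Gb u v Qu Qv Pu Pv) as H. pose proof (Gb u' v Qu' Qv Pu' Pv) as H0.
      pose proof (Gb u' v' Qu' Qv' Pu' Pv') as H3.
      change (Rabs (RInt f u' v' - RInt f u v) < eps).
      replace (RInt f u' v' - RInt f u v) with
        (- ((RInt f u v - RInt f u' v) + (RInt f u' v - RInt f u' v'))) by ring.
      rewrite Rabs_Ropp. eapply Rle_lt_trans; [apply Rabs_triang|].
      apply Rabs_def2 in H. apply Rabs_def2 in H0. apply Rabs_def2 in H3.
      assert (Rabs (RInt G u v - RInt G u' v) < eps/2) by (apply Rabs_def1; lra).
      assert (Rabs (RInt G u' v - RInt G u' v') < eps/2) by (apply Rabs_def1; lra).
      lra.
Qed.

Lemma gen_antider (Fa Fb : (R -> Prop) -> Prop) (FFa : Filter Fa) (FFb : Filter Fb)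
  (f F : R -> R) (la lb : R) :
  filter_prod Fa Fb (fun ab => is_RInt f (fst ab) (snd ab) (F (snd ab) - F (fst ab))) ->
  filterlim F Fa (locally la) -> filterlim F Fb (locally lb) ->
  is_RInt_gen f Fa Fb (lb - la).
Proof.
  intros Hr Ha Hb.
  assert (L : filterlim (fun ab : R * R => plus (F (snd ab)) (opp (F (fst ab)))) (filter_prod Fa Fb)
             (locally (plus lb (opp la)))).
  { apply (filterlim_comp_2 (G:=locally lb) (H:=locally (opp la)) (fun ab : R*R => F (snd ab)) (fun ab : R*R => opp (F (fst ab))) plus).
    - apply filterlim_comp with Fb; auto. apply filterlim_snd.
    - apply filterlim_comp with (locally la). apply filterlim_comp with Fa; auto. apply filterlim_fst.
      apply (filterlim_opp (V:=R_NormedModule)).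
    - apply (filterlim_plus (V:=R_NormedModule)). }
  intros P HP. unfold filtermapi.
  specialize (L P HP).
  assert (Hb2 : filter_prod Fa Fb (fun ab => is_RInt f (fst ab) (snd ab) (F (snd ab) - F (fst ab))
     /\ P (F (snd ab) - F (fst ab)))) by (apply filter_and; [exact Hr| exact L]).
  revert Hb2. apply filter_imp.
  intros [a b] [H1 H2]. exists (F b - F a). split; auto.
Qed.

Lemma gen_subst (Fa Fb Fa' Fb' : (R -> Prop) -> Prop) (FFa : Filter Fa) (FFb : Filter Fb)
  (f psi dpsi : R -> R) (l : R) :
  is_RInt_gen f Fa' Fb' l ->
  filterlim psi Fa Fa' -> filterlim psi Fb Fb' ->
  filter_prod Fa Fb (fun ab =>
    (forall x, Rmin (fst ab) (snd ab) <= x <= Rmax (fst ab) (snd ab) -> continuous f (psi x)) /\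
    (forall x, Rmin (fst ab) (snd ab) <= x <= Rmax (fst ab) (snd ab) ->
        is_derive psi x (dpsi x) /\ continuous dpsi x)) ->
  is_RInt_gen (fun t => dpsi t * f (psi t)) Fa Fb l.
Proof.
  intros Hf Ha Hb Hr P HP.
  destruct (Hf P HP) as [Qa Qb HQa HQb HQ].
  unfold filtermapi.
  assert (H2 : filter_prod Fa Fb (fun ab => Qa (psi (fst ab)) /\ Qb (psi (snd ab)))).
  { apply Filter_prod with (fun a => Qa (psi a)) (fun b => Qb (psi b)).
    apply Ha; auto. apply Hb; auto. intros; simpl; auto. }
  generalize (filter_and _ _ Hr H2). apply filter_imp.
  intros [a b] [[C1 C2] [Q1 Q2]]. simpl in *.
  destruct (HQ _ _ Q1 Q2) as [y [Hy Py]].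
  exists y. split; auto.
  change (is_RInt (V:=R_CompleteNormedModule) f (psi a) (psi b) y) in Hy.
  apply is_RInt_unique in Hy. rewrite <- Hy.
  apply (is_RInt_comp (V:=R_CompleteNormedModule) f psi dpsi a b C1 C2).
Qed.

Lemma cdR (f:R->R) x : ex_derive f x -> continuous f x.
Proof. apply (ex_derive_continuous (K:=R_AbsRing) (V:=R_NormedModule)). Qed.

Lemma exRc (f : R -> R) a b :
  (forall z, Rmin a b <= z <= Rmax a b -> continuous f z) -> ex_RInt f a b.
Proof. apply (ex_RInt_continuous (V:=R_CompleteNormedModule)). Qed.

Lemma exp_le_m x y : x <= y -> exp x <= exp y.
Proof. intros [H|H]; [left; apply exp_increasing; auto| subst; right; auto]. Qed.

Lemma Rpower_pos a b : 0 < Rpower a b.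
Proof. unfold Rpower. apply exp_pos. Qed.

Lemma poly_exp_bound (b u : R) : 0 < b -> 0 < u ->
  Rpower u b <= Rpower (2 * b) b * exp (u / 2).
Proof.
  intros hb hu.
  assert (H1 : u / (2 * b) <= exp (u / (2 * b))).
  { destruct (Req_dec (u / (2*b)) 0) as [e|ne].
    - rewrite e, exp_0; lra.
    - pose proof (exp_ineq1 _ ne). lra. }
  assert (H2 : Rpower (u / (2 * b)) b <= Rpower (exp (u / (2 * b))) b).
  { apply Rle_Rpower_l; [lra|]. split; auto. apply Rdiv_lt_0_compat; lra. }
  assert (E1 : Rpower (exp (u / (2 * b))) b = exp (u / 2)).
  { unfold Rpower. rewrite ln_exp. f_equal. field. lra. }
  assert (E2 : Rpower u b = Rpower (2*b) b * Rpower (u / (2 * b)) b).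
  { rewrite Rpower_mult_distr; [|lra|apply Rdiv_lt_0_compat; lra]. f_equal. field. lra. }
  rewrite E2. apply Rmult_le_compat_l. left; apply Rpower_pos. lra.
Qed.

Lemma Rpower_m1 t c : 0 < t -> Rpower t (c - 1) = Rpower t c / t.
Proof.
  intros ht. unfold Rpower. replace ((c - 1) * ln t) with (c * ln t + - ln t) by ring.
  rewrite exp_plus, exp_Ropp, exp_ln; auto.
Qed.

Lemma ball_R (x e y : R) : ball x e y -> Rabs (y - x) < e.
Proof. auto. Qed.

Lemma at_right_intro x (d : posreal) (P : R -> Prop) :
  (forall u, x < u < x + d -> P u) -> at_right x P.
Proof.
  intros H. exists d. intros u Hu hu. apply ball_R in Hu. apply Rabs_def2 in Hu. apply H; lra.
Qed.

Lemma at_left_intro x (d : posreal) (P : R -> Prop) :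
  (forall u, x - d < u < x -> P u) -> at_left x P.
Proof.
  intros H. exists d. intros u Hu hu. apply ball_R in Hu. apply Rabs_def2 in Hu. apply H; lra.
Qed.

Lemma lim_pow0 a : 0 < a -> filterlim (fun t => Rpower t a / a) (at_right 0) (locally 0).
Proof.
  intros ha P [eps Heps].
  assert (ea : 0 < eps * a) by (destruct eps; simpl; nra).
  exists (mkposreal _ (exp_pos (ln (eps * a) / a))).
  intros u Hu hu. apply Heps. apply ball_R in Hu. simpl in Hu.
  change (Rabs (Rpower u a / a - 0) < eps).
  rewrite Rminus_0_r in *. rewrite Rabs_pos_eq in Hu by lra.
  assert (L : ln u < ln (eps * a) / a).
  { rewrite <- (ln_exp (ln (eps * a) / a)). apply ln_increasing; auto. }
  assert (L2 : a * ln u < ln (eps * a)).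
  { apply (Rmult_lt_compat_l a) in L; auto. field_simplify in L; lra. }
  unfold Rpower. rewrite Rabs_pos_eq.
  - apply Rmult_lt_reg_r with a; auto. field_simplify; try lra.
    apply exp_increasing in L2. rewrite exp_ln in L2; auto. lra.
  - left. apply Rdiv_lt_0_compat; auto. apply exp_pos.
Qed.

Lemma lim_atpoint (F : R -> R) b : filterlim F (at_point b) (locally (F b)).
Proof. intros P HP. unfold filtermap, at_point. apply locally_singleton; auto. Qed.

Lemma gamma_part1 a : 0 < a ->
  exists l, is_RInt_gen (fun t => Rpower t (a - 1) * exp (- t)) (at_right 0) (at_point 1) l.
Proof.
  intros ha.
  assert (HG : is_RInt_gen (fun t => Rpower t (a - 1)) (at_right 0) (at_point 1)
                 (Rpower 1 a / a - 0)).
  { apply gen_antider with (F := fun t => Rpower t a / a).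
    - exact _. - exact _.
    - apply Filter_prod with (fun u => 0 < u) (fun v => v = 1).
      + exists (mkposreal 1 Rlt_0_1). intros; auto.
      + reflexivity.
      + intros u v hu hv. simpl. subst v.
        apply (is_RInt_derive (V:=R_CompleteNormedModule) (fun t => Rpower t a / a)).
        * intros z Hz. assert (0 < z) by (unfold Rmin in Hz; destruct (Rle_dec u 1); lra).
          unfold Rpower. auto_derive; [lra|].
          change (exp ((a - 1) * ln z)) with (Rpower z (a-1)). rewrite (Rpower_m1 z a) by lra. unfold Rpower. field. lra.
        * intros z Hz. assert (0 < z) by (unfold Rmin in Hz; destruct (Rle_dec u 1); lra).
          apply cdR. unfold Rpower. auto_derive. lra.
    - apply lim_pow0; auto.
    - exact (lim_atpoint (fun t => Rpower t a / a) 1). }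
  eapply (cmp_conv _ _ _ _ _ _ _ (fun u => 0 < u < 1) (fun v => v = 1)); [| reflexivity | | exact HG].
  - apply (at_right_intro 0 (mkposreal 1 Rlt_0_1)). simpl. intros; lra.
  - intros u v [hu0 hu1] hv. subst v.
    assert (Hc : forall z, Rmin u 1 <= z <= Rmax u 1 -> 0 < z).
    { intros z Hz. unfold Rmin in Hz; destruct (Rle_dec u 1); lra. }
    repeat split.
    + apply exRc. intros z Hz. specialize (Hc z Hz).
      apply cdR. unfold Rpower. auto_derive. lra.
    + apply exRc. intros z Hz. specialize (Hc z Hz).
      apply cdR. unfold Rpower. auto_derive. lra.
    + intros z Hz. specialize (Hc z Hz).
      rewrite Rabs_pos_eq.
      * rewrite <- (Rmult_1_r (Rpower z (a-1))) at 2. apply Rmult_le_compat_l.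
        left; apply Rpower_pos. rewrite <- exp_0. apply exp_le_m. lra.
      * apply Rmult_le_pos; left; [apply Rpower_pos | apply exp_pos].
Qed.

Lemma lim_expinf C : 0 < C ->
  filterlim (fun t => - 2 * C * exp (- t / 2)) (Rbar_locally p_infty) (locally 0).
Proof.
  intros hC P [eps Heps].
  assert (e2 : 0 < eps / (2 * C)) by (destruct eps; simpl; apply Rdiv_lt_0_compat; lra).
  exists (- 2 * ln (eps / (2 * C))). intros t Ht. apply Heps.
  change (Rabs (- 2 * C * exp (- t / 2) - 0) < eps).
  rewrite Rminus_0_r, Rabs_left.
  2: { assert (0 < exp (- t / 2)) by apply exp_pos. nra. }
  assert (H1 : - t / 2 < ln (eps / (2 * C))) by lra.
  apply exp_increasing in H1. rewrite exp_ln in H1 by auto.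
  apply (Rmult_lt_compat_l (2 * C)) in H1; [|lra].
  replace (2 * C * (eps / (2 * C))) with (pos eps) in H1 by (field; lra). lra.
Qed.

Lemma gamma_part2 a : 0 < a ->
  exists l, is_RInt_gen (fun t => Rpower t (a - 1) * exp (- t)) (at_point 1) (Rbar_locally p_infty) l.
Proof.
  intros ha.
  set (b := Rabs (a - 1) + 1).
  assert (hb : 0 < b) by (unfold b; pose proof (Rabs_pos (a-1)); lra).
  set (C := Rpower (2 * b) b).
  assert (hC : 0 < C) by apply Rpower_pos.
  assert (HG : is_RInt_gen (fun t => C * exp (- t / 2)) (at_point 1) (Rbar_locally p_infty)
                 (0 - (- 2 * C * exp (- 1 / 2)))).
  { apply gen_antider with (F := fun t => - 2 * C * exp (- t / 2)).
    - exact _. - exact _.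
    - apply Filter_prod with (fun u => u = 1) (fun v => 1 < v).
      + reflexivity.
      + exists 1. auto.
      + intros u v hu hv. simpl. subst u.
        apply (is_RInt_derive (V:=R_CompleteNormedModule) (fun t => - 2 * C * exp (- t / 2))).
        * intros z Hz. auto_derive; [auto|]. unfold Rdiv. field.
        * intros z Hz. apply cdR. auto_derive. auto.
    - exact (lim_atpoint (fun t => - 2 * C * exp (- t / 2)) 1).
    - apply lim_expinf; auto. }
  eapply (cmp_conv _ _ _ _ _ _ _ (fun u => u = 1) (fun v => 1 < v)); [reflexivity | exists 1; auto | | exact HG].
  intros u v hu hv. subst u.
  assert (Hc : forall z, Rmin 1 v <= z <= Rmax 1 v -> 1 <= z).
  { intros z Hz. unfold Rmin in Hz; destruct (Rle_dec 1 v); lra. }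
  repeat split.
  + apply exRc. intros z Hz. specialize (Hc z Hz).
    apply cdR. unfold Rpower. auto_derive. lra.
  + apply exRc. intros z Hz. apply cdR. auto_derive. auto.
  + intros z Hz. specialize (Hc z Hz).
    rewrite Rabs_pos_eq by (apply Rmult_le_pos; left; [apply Rpower_pos | apply exp_pos]).
    assert (H1 : Rpower z (a - 1) <= Rpower z b).
    { apply Rle_Rpower; auto. unfold b. pose proof (Rle_abs (a-1)). lra. }
    pose proof (poly_exp_bound b z hb ltac:(lra)) as H2.
    assert (E : exp (- z / 2) = exp (z / 2) * exp (- z)).
    { rewrite <- exp_plus. f_equal. field. }
    rewrite E. fold C in H2.
    replace (C * (exp (z / 2) * exp (- z))) with ((C * exp (z / 2)) * exp (- z)) by ring.
    apply Rmult_le_compat_r. left; apply exp_pos. lra.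
Qed.

Lemma gamma_conv a : 0 < a ->
  is_RInt_gen (fun t => Rpower t (a - 1) * exp (- t)) (at_right 0) (Rbar_locally p_infty)
    (EulerGamma a).
Proof.
  intros ha.
  destruct (gamma_part1 a ha) as [l1 H1]. destruct (gamma_part2 a ha) as [l2 H2].
  pose proof (is_RInt_gen_Chasles _ _ _ _ H1 H2) as H.
  unfold EulerGamma. rewrite (is_RInt_gen_unique _ _ H). exact H.
Qed.

Lemma ln_le_m1 z : 0 < z -> ln z <= z - 1.
Proof. intros hz. pose proof (exp_ineq1_le (ln z)). rewrite exp_ln in H; auto. lra. Qed.

Lemma mln_bounds t : 0 < t < 1 -> 0 < - ln t <= (1 - t) / t.
Proof.
  intros [h0 h1]. split.
  - assert (ln t < ln 1) by (apply ln_increasing; lra). rewrite ln_1 in H. lra.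
  - pose proof (ln_le_m1 (/ t) (Rinv_0_lt_compat _ h0)). rewrite ln_Rinv in H by auto.
    replace ((1 - t) / t) with (/ t - 1) by (field; lra). lra.
Qed.

Lemma lim_mln_0 c : 0 < c -> filterlim (fun t => - c * ln t) (at_right 0) (Rbar_locally p_infty).
Proof.
  intros hc P [M HM].
  apply (at_right_intro 0 (mkposreal _ (exp_pos (- M / c)))). simpl. intros u [hu0 hu1].
  apply HM. rewrite Rplus_0_l in hu1.
  assert (ln u < - M / c) by (rewrite <- (ln_exp (- M / c)); apply ln_increasing; auto).
  apply (Rmult_lt_compat_l c) in H; auto. field_simplify in H; lra.
Qed.

Lemma lim_mln_1 c : 0 < c -> filterlim (fun t => - c * ln t) (at_left 1) (at_right 0).
Proof.
  intros hc P [eps Heps].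
  assert (hd : 0 < Rmin (1/2) (eps / (4 * c))).
  { apply Rmin_pos. lra. apply Rdiv_lt_0_compat. destruct eps; simpl; lra. lra. }
  apply (at_left_intro 1 (mkposreal _ hd)). simpl. intros u [hu0 hu1].
  pose proof (Rmin_l (1/2) (eps / (4 * c))). pose proof (Rmin_r (1/2) (eps / (4 * c))).
  destruct (mln_bounds u ltac:(lra)) as [b1 b2].
  assert (0 < - c * ln u) by nra.
  apply Heps; auto.
  change (Rabs (- c * ln u - 0) < eps). rewrite Rminus_0_r, Rabs_pos_eq by lra.
  assert ((1 - u) / u <= 2 * (1 - u)).
  { apply Rmult_le_reg_r with u; [lra|]. field_simplify; nra. }
  assert (H4 : 1 - u < eps / (4 * c)) by lra.
  apply (Rmult_lt_compat_l (4*c)) in H4; [|lra].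
  replace (4 * c * (eps / (4 * c))) with (pos eps) in H4 by (field; lra).
  nra.
Qed.

Lemma lim_1m_r : filterlim (fun t => 1 - t) (at_left 1) (at_right 0).
Proof.
  intros P [eps Heps]. apply (at_left_intro 1 eps). intros u [hu0 hu1].
  apply Heps; [|lra]. change (Rabs (1 - u - 0) < eps). rewrite Rabs_pos_eq; lra.
Qed.

Lemma lim_1m_l : filterlim (fun t => 1 - t) (at_right 0) (at_left 1).
Proof.
  intros P [eps Heps]. apply (at_right_intro 0 eps). intros u [hu0 hu1].
  apply Heps; [|lra]. change (Rabs (1 - u - 1) < eps). rewrite Rabs_left; lra.
Qed.

Lemma cont_E a z : 0 < z -> continuous (fun t => Rpower t (a - 1) * exp (- t)) z.
Proof. intros hz. apply cdR. unfold Rpower. auto_derive. lra. Qed.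

Lemma g_int x y : 0 < x -> 0 < y ->
  is_RInt_gen (fun t => Rpower (- ln t) (x - 1) * Rpower t (y - 1)) (at_right 0) (at_left 1)
    (EulerGamma x / Rpower y x).
Proof.
  intros hx hy.
  pose proof (is_RInt_gen_swap _ _ (gamma_conv x hx)) as H0.
  assert (H1 := gen_subst (at_right 0) (at_left 1) _ _ _ _ _ (fun t => - y * ln t) (fun t => - y / t) _ H0
                 (lim_mln_0 y hy) (lim_mln_1 y hy)).
  assert (Hr : filter_prod (at_right 0) (at_left 1) (fun ab =>
     forall z, Rmin (fst ab) (snd ab) <= z <= Rmax (fst ab) (snd ab) -> 0 < z < 1)).
  { apply Filter_prod with (fun u => 0 < u < 1) (fun v => 0 < v < 1).
    - apply (at_right_intro 0 (mkposreal 1 Rlt_0_1)); simpl; intros; lra.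
    - apply (at_left_intro 1 (mkposreal 1 Rlt_0_1)); simpl; intros; lra.
    - intros u v hu hv z Hz; simpl in Hz. unfold Rmin, Rmax in Hz. destruct (Rle_dec u v); lra. }
  specialize (H1 ltac:(revert Hr; apply filter_imp; intros [u v] Hz; simpl in *; split;
      [ intros z Hzz; specialize (Hz z Hzz); apply cont_E;
        pose proof (mln_bounds z Hz); nra
      | intros z Hzz; specialize (Hz z Hzz); split;
        [ auto_derive; [lra|]; field; lra
        | apply cdR; auto_derive; lra ] ])).
  apply (fun H => is_RInt_gen_scal _ (- / Rpower y x) _ H) in H1.
  replace (EulerGamma x / Rpower y x) with (scal (- / Rpower y x) (opp (EulerGamma x))).
  2: { unfold scal, opp; simpl. unfold mult; simpl. field. apply Rgt_not_eq, Rpower_pos. }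
  revert H1. apply is_RInt_gen_ext; try exact _.
  revert Hr. apply filter_imp. intros [u v] Hz t Ht. simpl in *.
  assert (Ht1 : 0 < t < 1) by (apply Hz; lra).
  destruct (mln_bounds t Ht1) as [b1 _].
  unfold scal; simpl; unfold mult; simpl.
  rewrite (Rpower_m1 t y) by lra.
  replace (- y * ln t) with (y * (- ln t)) by ring.
  rewrite <- (Rpower_mult_distr y (- ln t) (x - 1)) by lra.
  rewrite (Rpower_m1 y x) by lra.
  replace (- (y * - ln t)) with (y * ln t) by ring.
  change (exp (y * ln t)) with (Rpower t y).
  field; repeat split; (lra || (apply Rgt_not_eq; apply Rpower_pos)).
Qed.

Lemma h_int x y : 0 < x -> 0 < y ->
  is_RInt_gen (fun t => Rpower (1 - t) (x - 1) * Rpower (- ln (1 - t)) (y - 1)) (at_right 0) (at_left 1)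
    (EulerGamma y / Rpower x y).
Proof.
  intros hx hy.
  pose proof (gamma_conv y hy) as H0.
  assert (L1 : filterlim (fun t => - x * ln (1 - t)) (at_right 0) (at_right 0)).
  { apply (filterlim_comp _ _ _ (fun t => 1 - t) (fun s => - x * ln s) _ (at_left 1)).
    apply lim_1m_l. apply lim_mln_1; auto. }
  assert (L2 : filterlim (fun t => - x * ln (1 - t)) (at_left 1) (Rbar_locally p_infty)).
  { apply (filterlim_comp _ _ _ (fun t => 1 - t) (fun s => - x * ln s) _ (at_right 0)).
    apply lim_1m_r. apply lim_mln_0; auto. }
  assert (H1 := gen_subst (at_right 0) (at_left 1) _ _ _ _ _ (fun t => - x * ln (1 - t))
                 (fun t => x / (1 - t)) _ H0 L1 L2).
  assert (Hr : filter_prod (at_right 0) (at_left 1) (fun ab =>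
     forall z, Rmin (fst ab) (snd ab) <= z <= Rmax (fst ab) (snd ab) -> 0 < z < 1)).
  { apply Filter_prod with (fun u => 0 < u < 1) (fun v => 0 < v < 1).
    - apply (at_right_intro 0 (mkposreal 1 Rlt_0_1)); simpl; intros; lra.
    - apply (at_left_intro 1 (mkposreal 1 Rlt_0_1)); simpl; intros; lra.
    - intros u v hu hv z Hz; simpl in Hz. unfold Rmin, Rmax in Hz. destruct (Rle_dec u v); lra. }
  specialize (H1 ltac:(revert Hr; apply filter_imp; intros [u v] Hz; simpl in *; split;
      [ intros z Hzz; specialize (Hz z Hzz); apply cont_E;
        pose proof (mln_bounds (1 - z) ltac:(lra)); nra
      | intros z Hzz; specialize (Hz z Hzz); split;
        [ auto_derive; [lra|]; field; lra
        | apply cdR; auto_derive; lra ] ])).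
  apply (fun H => is_RInt_gen_scal _ (/ Rpower x y) _ H) in H1.
  replace (EulerGamma y / Rpower x y) with (scal (/ Rpower x y) (EulerGamma y)).
  2: { unfold scal; simpl. unfold mult; simpl. field. apply Rgt_not_eq, Rpower_pos. }
  revert H1. apply is_RInt_gen_ext; try exact _.
  revert Hr. apply filter_imp. intros [u v] Hz t Ht. simpl in *.
  assert (Ht1 : 0 < t < 1) by (apply Hz; lra).
  destruct (mln_bounds (1 - t) ltac:(lra)) as [b1 _].
  unfold scal; simpl; unfold mult; simpl.
  rewrite (Rpower_m1 (1 - t) x) by lra.
  replace (- x * ln (1 - t)) with (x * (- ln (1 - t))) by ring.
  rewrite <- (Rpower_mult_distr x (- ln (1 - t)) (y - 1)) by lra.
  rewrite (Rpower_m1 x y) by lra.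
  replace (- (x * - ln (1 - t))) with (x * ln (1 - t)) by ring.
  change (exp (x * ln (1 - t))) with (Rpower (1 - t) x).
  field; repeat split; (lra || (apply Rgt_not_eq; apply Rpower_pos)).
Qed.

Lemma cmp_val (f g : R -> R) lf lg :
  is_RInt_gen f (at_right 0) (at_left 1) lf -> is_RInt_gen g (at_right 0) (at_left 1) lg ->
  (forall t, 0 < t < 1 -> 0 <= f t <= g t) -> lf <= lg.
Proof.
  intros Hf Hg Hb.
  assert (N : norm lf <= lg).
  { apply (RInt_gen_norm (Fa:=at_right 0) (Fb:=at_left 1) f g lf lg); try exact _.
    - apply Filter_prod with (fun u => 0 < u < 1/2) (fun v => 1/2 < v < 1).
      + apply (at_right_intro 0 (mkposreal (1/2) ltac:(lra))); simpl; intros; lra.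
      + apply (at_left_intro 1 (mkposreal (1/2) ltac:(lra))); simpl; intros; lra.
      + intros; simpl; lra.
    - apply Filter_prod with (fun u => 0 < u < 1/2) (fun v => 1/2 < v < 1).
      + apply (at_right_intro 0 (mkposreal (1/2) ltac:(lra))); simpl; intros; lra.
      + apply (at_left_intro 1 (mkposreal (1/2) ltac:(lra))); simpl; intros; lra.
      + intros u v hu hv z Hz; simpl in *. specialize (Hb z ltac:(lra)).
        change (Rabs (f z) <= g z). rewrite Rabs_pos_eq; lra.
    - exact Hf.
    - exact Hg. }
  change (Rabs lf <= lg) in N. pose proof (Rle_abs lf). lra.
Qed.

Lemma Rpow_mono_pos a b c : 0 < a <= b -> 0 <= c -> Rpower a c <= Rpower b c.
Proof.
  intros hab hc. unfold Rpower. apply exp_le_m.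
  pose proof (ln_le a b ltac:(lra) ltac:(lra)). nra.
Qed.

Lemma Rpow_mono_neg a b c : 0 < a <= b -> c <= 0 -> Rpower b c <= Rpower a c.
Proof.
  intros hab hc. unfold Rpower. apply exp_le_m.
  pose proof (ln_le a b ltac:(lra) ltac:(lra)). nra.
Qed.

Lemma mln1_lower t : 0 < t < 1 -> t <= - ln (1 - t).
Proof. intros h. pose proof (ln_le_m1 (1 - t) ltac:(lra)). lra. Qed.

Lemma mln1_upper t : 0 < t <= 1/2 -> - ln (1 - t) <= 2 * t.
Proof.
  intros h. destruct (mln_bounds (1 - t) ltac:(lra)) as [_ b].
  assert ((1 - (1 - t)) / (1 - t) <= 2 * t).
  { apply Rmult_le_reg_r with (1 - t); [lra|]. field_simplify; nra. }
  lra.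
Qed.

Lemma pow_dom (s t c : R) : 0 < t -> t <= s <= 2 * t ->
  Rpower s c <= (1 + Rpower 2 c) * Rpower t c.
Proof.
  intros ht hs.
  destruct (Rle_dec 0 c) as [hc|hc].
  - assert (Rpower s c <= Rpower (2 * t) c) by (apply Rpow_mono_pos; lra).
    rewrite <- Rpower_mult_distr in H by lra.
    pose proof (Rpower_pos t c). lra.
  - assert (Rpower s c <= Rpower t c) by (apply Rpow_mono_neg; lra).
    pose proof (Rpower_pos t c). pose proof (Rpower_pos 2 c). nra.
Qed.

Lemma B_cont x y z : 0 < z < 1 ->
  continuous (fun t => Rpower (- ln t) (x - 1) * Rpower (- ln (1 - t)) (y - 1)) z.
Proof.
  intros hz. destruct (mln_bounds z hz) as [b1 _].
  destruct (mln_bounds (1 - z) ltac:(lra)) as [b2 _].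
  apply cdR. unfold Rpower. auto_derive; try replace (1 + - z) with (1 - z) by ring; repeat split; lra.
Qed.

Lemma g_cont x y z : 0 < z < 1 ->
  continuous (fun t => Rpower (- ln t) (x - 1) * Rpower t (y - 1)) z.
Proof.
  intros hz. destruct (mln_bounds z hz) as [b1 _].
  apply cdR. unfold Rpower. auto_derive; try replace (1 + - z) with (1 - z) by ring; repeat split; lra.
Qed.

Lemma h_cont x y z : 0 < z < 1 ->
  continuous (fun t => Rpower (1 - t) (x - 1) * Rpower (- ln (1 - t)) (y - 1)) z.
Proof.
  intros hz. destruct (mln_bounds (1 - z) ltac:(lra)) as [b2 _].
  apply cdR. unfold Rpower. auto_derive; try replace (1 + - z) with (1 - z) by ring; repeat split; lra.
Qed.

Lemma B_int x y : 0 < x -> 0 < y ->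
  is_RInt_gen (fun t => Rpower (- ln t) (x - 1) * Rpower (- ln (1 - t)) (y - 1))
    (at_right 0) (at_left 1) (Bigamma x y).
Proof.
  intros hx hy.
  set (K := (1 + Rpower 2 (y - 1)) * (1 + Rpower 2 (x - 1))).
  pose proof (g_int x y hx hy) as Hg. pose proof (h_int x y hx hy) as Hh.
  set (g := fun t => Rpower (- ln t) (x - 1) * Rpower t (y - 1)) in Hg.
  set (h := fun t => Rpower (1 - t) (x - 1) * Rpower (- ln (1 - t)) (y - 1)) in Hh.
  assert (HG : is_RInt_gen (fun t => K * (g t + h t)) (at_right 0) (at_left 1)
     (K * (EulerGamma x / Rpower y x + EulerGamma y / Rpower x y)))
    by exact (is_RInt_gen_scal _ K _ (is_RInt_gen_plus _ _ _ _ Hg Hh)).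
  assert (HPa : at_right 0 (fun u => 0 < u < 1))
    by (apply (at_right_intro 0 (mkposreal 1 Rlt_0_1)); simpl; intros; lra).
  assert (HPb : at_left 1 (fun u => 0 < u < 1))
    by (apply (at_left_intro 1 (mkposreal 1 Rlt_0_1)); simpl; intros; lra).
  refine (match cmp_conv (at_right 0) (at_left 1) _ _
     (fun t => Rpower (- ln t) (x - 1) * Rpower (- ln (1 - t)) (y - 1)) (fun t => K * (g t + h t)) _
     (fun u => 0 < u < 1) (fun v => 0 < v < 1) HPa HPb _ HG with ex_intro l Hl => _ end).
  1: { intros u v hu hv.
    assert (Hc : forall z, Rmin u v <= z <= Rmax u v -> 0 < z < 1).
    { intros z Hz. unfold Rmin, Rmax in Hz. destruct (Rle_dec u v); lra. }
    repeat split.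
    + apply exRc. intros z Hz. apply B_cont; auto.
    + apply exRc. intros z Hz. specialize (Hc z Hz).
      apply cdR. unfold g, h. unfold Rpower.
      destruct (mln_bounds z Hc) as [b1 _]. destruct (mln_bounds (1 - z) ltac:(lra)) as [b2 _].
      auto_derive; try replace (1 + - z) with (1 - z) by ring; repeat split; lra.
    + intros z Hz. specialize (Hc z Hz).
      destruct (mln_bounds z Hc) as [b1 _]. destruct (mln_bounds (1 - z) ltac:(lra)) as [b2 _].
      pose proof (Rpower_pos (- ln z) (x - 1)). pose proof (Rpower_pos (- ln (1 - z)) (y - 1)).
      pose proof (Rpower_pos z (y - 1)). pose proof (Rpower_pos (1 - z) (x - 1)).
      pose proof (Rpower_pos 2 (y - 1)). pose proof (Rpower_pos 2 (x - 1)).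
      rewrite Rabs_pos_eq by nra. unfold K, g, h.
      destruct (Rle_dec z (1/2)).
      * assert (Rpower (- ln (1 - z)) (y - 1) <= (1 + Rpower 2 (y - 1)) * Rpower z (y - 1)).
        { apply pow_dom; [lra|]. split. apply mln1_lower; lra. apply mln1_upper; lra. }
        cbv beta.
        set (A := Rpower (- ln z) (x - 1)) in *. set (P := Rpower (- ln (1 - z)) (y - 1)) in *.
        set (T := Rpower z (y - 1)) in *. set (Q := Rpower (1 - z) (x - 1)) in *.
        set (pa := Rpower 2 (x - 1)) in *. set (pb := Rpower 2 (y - 1)) in *.
        assert (A * P <= A * ((1 + pb) * T)) by (apply Rmult_le_compat_l; lra).
        assert (0 <= (1 + pb) * T * A * pa) by (repeat apply Rmult_le_pos; lra).
        assert (0 <= (1 + pb) * (1 + pa) * (Q * P)) by (repeat apply Rmult_le_pos; lra).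
        nra.
      * assert (Rpower (- ln z) (x - 1) <= (1 + Rpower 2 (x - 1)) * Rpower (1 - z) (x - 1)).
        { apply pow_dom; [lra|]. split.
          - pose proof (ln_le_m1 z ltac:(lra)). lra.
          - pose proof (mln1_upper (1 - z) ltac:(lra)). replace (1 - (1 - z)) with z in H5 by ring. lra. }
        cbv beta.
        set (A := Rpower (- ln z) (x - 1)) in *. set (P := Rpower (- ln (1 - z)) (y - 1)) in *.
        set (T := Rpower z (y - 1)) in *. set (Q := Rpower (1 - z) (x - 1)) in *.
        set (pa := Rpower 2 (x - 1)) in *. set (pb := Rpower 2 (y - 1)) in *.
        assert (A * P <= ((1 + pa) * Q) * P) by (apply Rmult_le_compat_r; lra).
        assert (0 <= (1 + pa) * Q * P * pb) by (repeat apply Rmult_le_pos; lra).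
        assert (0 <= (1 + pb) * (1 + pa) * (A * T)) by (repeat apply Rmult_le_pos; lra).
        nra. }
  unfold Bigamma. rewrite (is_RInt_gen_unique _ _ Hl). exact Hl.
Qed.

Lemma lb_y x y : 0 < x -> 0 < y -> 1 <= y -> EulerGamma x / Rpower y x <= Bigamma x y.
Proof.
  intros hx hy h1. apply (cmp_val _ _ _ _ (g_int x y hx hy) (B_int x y hx hy)).
  intros t ht. pose proof (Rpower_pos (- ln t) (x - 1)). pose proof (Rpower_pos t (y - 1)).
  pose proof (mln1_lower t ht).
  assert (Rpower t (y - 1) <= Rpower (- ln (1 - t)) (y - 1)) by (apply Rpow_mono_pos; lra).
  split. nra. apply Rmult_le_compat_l; lra.
Qed.

Lemma ub_y x y : 0 < x -> 0 < y -> y <= 1 -> Bigamma x y <= EulerGamma x / Rpower y x.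
Proof.
  intros hx hy h1. apply (cmp_val _ _ _ _ (B_int x y hx hy) (g_int x y hx hy)).
  intros t ht. pose proof (Rpower_pos (- ln t) (x - 1)). pose proof (Rpower_pos (- ln (1 - t)) (y - 1)).
  pose proof (mln1_lower t ht).
  assert (Rpower (- ln (1 - t)) (y - 1) <= Rpower t (y - 1)) by (apply Rpow_mono_neg; lra).
  split. nra. apply Rmult_le_compat_l; lra.
Qed.

Lemma lb_x x y : 0 < x -> 0 < y -> 1 <= x -> EulerGamma y / Rpower x y <= Bigamma x y.
Proof.
  intros hx hy h1. apply (cmp_val _ _ _ _ (h_int x y hx hy) (B_int x y hx hy)).
  intros t ht. pose proof (Rpower_pos (1 - t) (x - 1)). pose proof (Rpower_pos (- ln (1 - t)) (y - 1)).
  pose proof (ln_le_m1 t ltac:(lra)).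
  assert (Rpower (1 - t) (x - 1) <= Rpower (- ln t) (x - 1)) by (apply Rpow_mono_pos; lra).
  split. nra. apply Rmult_le_compat_r; lra.
Qed.

Lemma ub_x x y : 0 < x -> 0 < y -> x <= 1 -> Bigamma x y <= EulerGamma y / Rpower x y.
Proof.
  intros hx hy h1. apply (cmp_val _ _ _ _ (B_int x y hx hy) (h_int x y hx hy)).
  intros t ht. pose proof (Rpower_pos (- ln t) (x - 1)). pose proof (Rpower_pos (- ln (1 - t)) (y - 1)).
  pose proof (ln_le_m1 t ltac:(lra)).
  assert (Rpower (- ln t) (x - 1) <= Rpower (1 - t) (x - 1)) by (apply Rpow_mono_neg; lra).
  split. nra. apply Rmult_le_compat_r; lra.
Qed.

Theorem mainTheorem6 (x y : R) (hx : 0 < x) (hy : 0 < y) :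
  (1 <= x -> 1 <= y ->
     Bigamma x y >= Rmax (EulerGamma x / Rpower y x) (EulerGamma y / Rpower x y)) /\
  (1 <= x -> y <= 1 ->
     EulerGamma y / Rpower x y <= Bigamma x y <= EulerGamma x / Rpower y x) /\
  (x <= 1 -> 1 <= y ->
     EulerGamma x / Rpower y x <= Bigamma x y <= EulerGamma y / Rpower x y) /\
  (x <= 1 -> y <= 1 ->
     Bigamma x y <= Rmin (EulerGamma x / Rpower y x) (EulerGamma y / Rpower x y)).
Proof.
  repeat split; intros.
  - apply Rle_ge. apply Rmax_lub; [apply lb_y | apply lb_x]; auto.
  - apply lb_x; auto.
  - apply ub_y; auto.
  - apply lb_y; auto.
  - apply ub_x; auto.
  - apply Rmin_glb; [apply ub_y | apply ub_x]; auto.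
Qed.
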